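(* Let $k\ge 3$, $k'=k-1$, and $A\in\mathcal{M}_d$. Let $\pi\in S_{2k'}$ be the cycle $\pi=(2k'\!-\!1\;\;2k'\!-\!2\;\cdots\;k'\!+\!1\;\;k')$. Then $$\operatorname{tr}_1\big[(1\,2\cdots k)^{T_k}(A\otimes\mathbb{1}^{\otimes(k-1)})\big]=\tau^{-1}\pi\,\tau\big(A\otimes\mathbb{1}^{\otimes(k-2)}\big).$$
   Context: $\mathcal{M}_d$ denotes complex $d\times d$ matrices; $\{|i\rangle\}$ is a fixed orthonormal basis of $\mathbb{C}^d$. A permutation $\sigma\in S_n$ acts on $(\mathbb{C}^d)^{\otimes n}$ by $\sigma|v_1\rangle\otimes\cdots\otimes|v_n\rangle=|v_{\sigma^{-1}(1)}\rangle\otimes\cdots\otimes|v_{\sigma^{-1}(n)}\rangle$; cycle notation $(a_1\,a_2\cdots a_r)$ means $a_1\to a_2\to\cdots\to a_r\to a_1$. $T_k$ is the partial transpose on the $k$-th factor in the basis $\{|i\rangle\}$; $\operatorname{tr}_1$ is the partial trace over the first factor. $\tau$ is the linear map from operators on $(\mathbb{C}^d)^{\otimes k'}$ to vectors in $(\mathbb{C}^d)^{\otimes 2k'}$ defined by $\tau(|i_1\dots i_{k'}\rangle\langle j_1\dots j_{k'}|)=|i_1\dots i_{k'}\rangle|j_1\dots j_{k'}\rangle$, and $\tau^{-1}$ is its inverse; thus $\tau^{-1}\pi\tau$ applies $\pi$ (acting on $(\mathbb{C}^d)^{\otimes 2k'}$) to the combined list of ket and bra indices. *)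

(* Defs.v *)
(* Operators on (C^d)^{(x) n} are represented by their
   matrix elements in the product basis |i_1 ... i_n>, indexed by
   multi-indices  i : {ffun 'I_n -> 'I_d}  (position m in 'I_n is the
   (m+1)-th tensor factor). Vectors in (C^d)^{(x) n} are their coordinate
   functions in the same basis. *)
From HB Require Import structures.
From mathcomp Require Import all_boot all_order all_algebra all_fingroup.
From mathcomp Require Export complex.
From mathcomp Require Export reals.
Set Implicit Arguments. Unset Strict Implicit. Unset Printing Implicit Defensive.
Import GRing.Theory.
Local Open Scope ring_scope.

Section Tensors.
Variables (C : comRingType) (d : nat).

Definition Idx n := {ffun 'I_n -> 'I_d}.
(* operators on (C^d)^{(x) n}:  X i j = <i| X |j> *)
Definition Op n := Idx n -> Idx n -> C.
Definition Vec n := Idx n -> C.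

Definition icat m n (i : Idx m) (j : Idx n) : Idx (m + n) :=
  [ffun x => match split x with inl a => i a | inr b => j b end].
Definition ileft m n (i : Idx (m + n)) : Idx m := [ffun a => i (lshift n a)].
Definition iright m n (i : Idx (m + n)) : Idx n := [ffun b => i (rshift m b)].
Definition icons n (a : 'I_d) (i : Idx n) : Idx n.+1 :=
  [ffun x => match unlift ord0 x with Some y => i y | None => a end].
Definition iset n (i : Idx n) (m : 'I_n) (a : 'I_d) : Idx n :=
  [ffun x => if x == m then a else i x].

Definition matop (A : 'M[C]_d) : Op 1 := fun i j => A (i ord0) (j ord0).
Definition idop n : Op n := fun i j => (i == j)%:R.
Definition tens m n (X : Op m) (Y : Op n) : Op (m + n) :=
  fun i j => X (ileft i) (ileft j) * Y (iright i) (iright j).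
Definition mulop n (X Y : Op n) : Op n := fun i j => \sum_(l : Idx n) X i l * Y l j.
Definition applyop n (X : Op n) (v : Vec n) : Vec n :=
  fun i => \sum_(j : Idx n) X i j * v j.
(* partial transpose on the factor m, in the basis {|i>} *)
Definition ptrans n (m : 'I_n) (X : Op n) : Op n :=
  fun i j => X (iset i m (j m)) (iset j m (i m)).
Definition ptr1 n (X : Op n.+1) : Op n :=
  fun i j => \sum_(a : 'I_d) X (icons a i) (icons a j).
(* tau(|i><j|) = |i>|j>, and its inverse *)
Definition tau n (X : Op n) : Vec (n + n) := fun v => X (ileft v) (iright v).
Definition tauinv n (v : Vec (n + n)) : Op n := fun i j => v (icat i j).

(* the permutation operator: sigma |v_1..v_n> = |v_{sigma^-1 1} .. v_{sigma^-1 n}>,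
   so <j| sigma |i> = 1 iff j (sigma m) = i m for all positions m. *)
Definition permop n (s : {perm 'I_n}) : Op n :=
  fun j i => [forall m, j (s m) == i m]%:R.
End Tensors.

(* cycle notation: for a duplicate-free list [a_1; ...; a_r] of positions,
   the permutation a_1 -> a_2 -> ... -> a_r -> a_1 (fixing everything else) *)
Definition cperm n (s : seq 'I_n) : {perm 'I_n} :=
  (if uniq s as b return (uniq s = b -> {perm 'I_n})
   then fun H => perm (can_inj (prev_next H)) else fun _ => 1%g) erefl.

(* the cycle (a_1 a_2 ... a_r) written with 1-based positions a_i in {1..n};
   position p corresponds to the ordinal p-1 of 'I_n *)
Definition cyc n (s : seq nat) : {perm 'I_n} :=
  cperm (pmap (fun p => insub p.-1) s).

(* Main.v *)
Require Import Defs.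
From HB Require Import structures.
From mathcomp Require Import all_boot all_order all_algebra all_fingroup.
From mathcomp Require Import complex reals.
From mathcomp Require Import zify.
From Stdlib Require Import FunctionalExtensionality.
Set Implicit Arguments. Unset Strict Implicit. Unset Printing Implicit Defensive.

Lemma cpermE n (s : seq 'I_n) : uniq s -> forall x, cperm s x = next s x.
Proof.
move=> u x; rewrite /cperm.
generalize (erefl (uniq s)).
revert u.
generalize (uniq s) at 1 3 4.
move=> b u; case: b u => // u' e.
by rewrite permE.
Qed.

Lemma map_pmap_insub N (l : seq nat) :
  all (fun p => 0 < p <= N) l ->
  map val (pmap (fun p => insub p.-1 : option 'I_N) l) = map predn l.
Proof.
elim: l => //= p l IH /andP[hp hl] /=.
case: insubP => [u _ hu /=|]; first by rewrite hu IH.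
by move/negP; case; lia.
Qed.

Lemma index_iota_ m k x : m <= x < m + k -> index x (iota m k) = x - m.
Proof.
move=> h; have e : x = nth 0 (iota m k) (x - m) by rewrite nth_iota; lia.
by rewrite {1}e index_uniq ?size_iota ?iota_uniq //; lia.
Qed.

Lemma map_pred_iota m k : map predn (iota m.+1 k) = iota m k.
Proof. by elim: k m => //= k IH m; rewrite IH. Qed.

Lemma next_iota0 N k : k <= N -> next (iota 0 N.+1) k = if k == N then 0 else k.+1.
Proof.
move=> hk.
rewrite next_nth mem_iota index_iota_; last lia.
rewrite ifT; last lia.
rewrite subn0 /=.
case: eqP => [->|ne].
  by rewrite nth_default // size_iota.
by rewrite nth_iota; lia.
Qed.

Lemma prev_iota n k : n <= k <= n.*2 ->
  prev (iota n n.+1) k = if k == n then n.*2 else k.-1.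
Proof.
move=> hk.
rewrite prev_nth mem_iota ifT; last lia.
change (nth n (iota n n.+1) (index k (iota n.+1 n)) = (if k == n then n.*2 else k.-1)).
case: eqP => [->|ne].
  rewrite memNindex ?size_iota ?nth_iota ?mem_iota; lia.
rewrite index_iota_ ?nth_iota; lia.
Qed.



Lemma cyc_sigma n (m : 'I_n.+2) :
  val (cyc n.+2 (iota 1 n.+2) m) = if val m == n.+1 then 0 else (val m).+1.
Proof.
rewrite /cyc.
set s := pmap _ _.
have hs : map val s = iota 0 n.+2.
  rewrite /s map_pmap_insub; first by rewrite map_pred_iota.
  apply/allP => p; rewrite mem_iota; lia.
have us : uniq s by rewrite -(map_inj_uniq val_inj) hs iota_uniq.
rewrite cpermE // -(next_map val_inj us) hs.
apply: next_iota0.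
by rewrite -ltnS; exact: ltn_ord.
Qed.

Lemma cyc_pi n (m : 'I_(n.+1 + n.+1)) :
  val (cyc (n.+1 + n.+1) (rev (iota n.+1 n.+1)) m) =
  if val m == n then n.*2 else if (n < val m) && (val m <= n.*2) then (val m).-1 else val m.
Proof.
rewrite /cyc.
set s := pmap _ _.
have hs : map val s = rev (iota n n.+1).
  rewrite /s map_pmap_insub; first by rewrite map_rev map_pred_iota.
  apply/allP => p; rewrite mem_rev mem_iota; lia.
have us : uniq s by rewrite -(map_inj_uniq val_inj) hs rev_uniq iota_uniq.
rewrite cpermE // -(next_map val_inj us) hs next_rev ?iota_uniq //.
have hk : \val m < n.+1 + n.+1 := ltn_ord m.
move: (\val m) hk => k hk.
case: (boolP (n <= k <= n.*2)) => h.
  rewrite prev_iota //.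
  case: eqP => // ne; rewrite ifT //; lia.
rewrite prev_nth mem_iota ifF; last lia.
rewrite ifF; last lia.
rewrite ifF //; lia.
Qed.

Section NX.
Variable d : nat.
Definition nx N (x : {ffun 'I_N -> 'I_d}) (p : nat) : option 'I_d := omap x (insub p).

Lemma nxE N (x : {ffun 'I_N -> 'I_d}) (o : 'I_N) : nx x o = Some (x o).
Proof. by rewrite /nx -[nat_of_ord o]/(val o) valK. Qed.

Lemma nx_out N (x : {ffun 'I_N -> 'I_d}) p : N <= p -> nx x p = None.
Proof. by move=> h; rewrite /nx insubF // ltnNge h. Qed.

Lemma nx_ind N (x : {ffun 'I_N -> 'I_d}) (E : nat -> option 'I_d) :
  (forall o : 'I_N, Some (x o) = E o) -> (forall p, N <= p -> E p = None) ->
  forall p, nx x p = E p.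
Proof.
move=> h1 h2 p; case: (ltnP p N) => hp.
  by have -> : p = Ordinal hp by []; rewrite nxE h1.
by rewrite nx_out // h2.
Qed.

Lemma eq_nx N (f g : {ffun 'I_N -> 'I_d}) : (f == g) = [forall o : 'I_N, nx f o == nx g o].
Proof.
apply/eqP/forallP => [->//|H]; apply/ffunP => o.
by have := eqP (H o); rewrite !nxE => -[].
Qed.

Lemma nx_icons m a (x : Idx d m) p :
  nx (icons a x) p = if p == 0 then Some a else nx x p.-1.
Proof.
move: p; apply: nx_ind => [o|q hq]; last by rewrite ifF ?nx_out //; lia.
rewrite ffunE; case: unliftP => [j ->|->] /=; last by [].
by rewrite nxE.
Qed.

Lemma nx_ileft m n (i : Idx d (m + n)) p : nx (ileft i) p = if p < m then nx i p else None.
Proof.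
move: p; apply: nx_ind => [o|q hq]; last by rewrite ifF //; lia.
by rewrite ffunE ltn_ord -nxE.
Qed.

Lemma nx_iright m n (i : Idx d (m + n)) p : nx (iright i) p = nx i (m + p).
Proof.
move: p; apply: nx_ind => [o|q hq]; last by rewrite nx_out //; lia.
by rewrite ffunE -nxE.
Qed.

Lemma nx_icat m n (x : Idx d m) (y : Idx d n) p :
  nx (icat x y) p = if p < m then nx x p else nx y (p - m).
Proof.
move: p; apply: nx_ind => [o|q hq]; last by rewrite ifF ?nx_out //; lia.
rewrite ffunE; case: splitP => [j e|k e].
  by rewrite e nxE.
by rewrite e addKn nxE.
Qed.

Lemma nx_iset N (i : Idx d N) o a p :
  nx (iset i o a) p = if p == o then Some a else nx i p.
Proof.
move: p; apply: nx_ind => [o'|q hq]; last by rewrite ifF ?nx_out //; have := ltn_ord o; lia.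
rewrite ffunE nxE; case: (o' =P o) => [->|ne]; rewrite ?eqxx // ifF //; apply/eqP => h; apply: ne; exact: val_inj.
Qed.

Lemma nx_comp N (X : Idx d N) (s : 'I_N -> 'I_N) (sv : nat -> nat)
  (hs : forall m : 'I_N, (s m : nat) = sv m) p :
  nx [ffun m => X (s m)] p = if p < N then nx X (sv p) else None.
Proof.
move: p; apply: nx_ind => [o|q hq]; last by rewrite ifF //; lia.
by rewrite ffunE ltn_ord -hs nxE.
Qed.

Lemma nx0 N (x : Idx d N.+1) : nx x 0 = Some (x ord0).
Proof. exact: (nxE x ord0). Qed.
Lemma nxmax N (x : Idx d N.+1) : nx x N = Some (x ord_max).
Proof. exact: (nxE x ord_max). Qed.

End NX.

Import GRing.Theory.
Local Open Scope ring_scope.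

Lemma sum_delta (C : nzRingType) (T : finType) (c : T) (G : T -> C) :
  \sum_(t : T) (t == c)%:R * G t = G c.
Proof.
rewrite (bigD1 c) //= eqxx mul1r big1 ?addr0 // => t /negbTE ->; by rewrite mul0r.
Qed.

Lemma iright_icons d m a (y : Idx d m) : @iright d 1 m (icons a y) = y.
Proof.
apply/eqP; rewrite eq_nx; apply/forallP => o.
by rewrite nx_iright nx_icons.
Qed.

Lemma icons_eta d m (l : Idx d m.+1) : l = icons (l ord0) (@iright d 1 m l).
Proof.
apply/eqP; rewrite eq_nx; apply/forallP => o.
rewrite nx_icons nx_iright; case: ifP => [/eqP e|ne]; first by rewrite e nx0.
apply/eqP; congr nx; move/negbT: ne; lia.
Qed.

Lemma icons_inj d m (y : Idx d m) a b : (icons a y == icons b y) = (a == b).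
Proof.
apply/eqP/eqP => [h|->//].
by have := congr1 (fun f => nx f 0) h; rewrite !nx_icons /= => -[].
Qed.

Lemma sum_tens_id (C : comNzRingType) d m (F : Idx d m.+1 -> C) (M : 'M[C]_d) a (y : Idx d m) :
  \sum_(l : Idx d m.+1) F l * @tens C d 1 m (matop M) (@idop C d m) l (icons a y)
  = \sum_(b : 'I_d) F (icons b y) * M b a.
Proof.
transitivity (\sum_(l : Idx d m.+1) \sum_(b : 'I_d) (l == icons b y)%:R * (F l * M b a)).
  apply: eq_bigr => l _.
  rewrite /tens /matop /idop iright_icons.
  have -> : @ileft d 1 m (icons a y) ord0 = a.
    by apply: Some_inj; rewrite -nxE nx_ileft nx_icons.
  have -> : @ileft d 1 m l ord0 = l ord0.
    by apply: Some_inj; rewrite -!nxE nx_ileft.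
  case: (boolP (@iright d 1 m l == y)) => [/eqP h|h].
    rewrite (bigD1 (l ord0)) //= big1 ?addr0.
      have -> : l == icons (l ord0) y by rewrite {1}(icons_eta l) h.
    by rewrite !mul1r mulr1.
    move=> b nb; rewrite {1}(icons_eta l) h icons_inj eq_sym (negbTE nb) mul0r //.
  rewrite mulr0 mulr0 big1 // => b _.
  case: eqP => [e|]; last by rewrite mul0r.
  by move: h; rewrite e iright_icons eqxx.
rewrite exchange_big /=; apply: eq_bigr => b _.
by rewrite sum_delta.
Qed.

Ltac ifs := repeat (match goal with |- context [if ?c then _ else _] =>
   (lazymatch c with context [if _ then _ else _] => fail | _ => idtac end);
   let H := fresh "H" in case: (boolP c) => /= H; try (move/eqP in H) end); try (exfalso; lia).

Ltac finimp := move=> /eqP E; apply/eqP;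
  match goal with E : nx ?X ?e1 = nx ?Y ?e2 |- _ =>
  first [ transitivity (nx X e1); [congr (nx _ _); lia | rewrite E; congr (nx _ _); lia]
        | transitivity (nx Y e2); [congr (nx _ _); lia | rewrite -E; congr (nx _ _); lia] ] end.

Definition Q d n (x y : Idx d n.+1) : bool :=
  (nx y n == nx y n.-1) && [forall o : 'I_n, (o.+1 < n)%N ==> (nx x o.+1 == nx y o)].

Lemma cyc_sigma' n (m : 'I_n.+2) :
  nat_of_ord (cyc n.+2 (iota 1 n.+2) m) = if nat_of_ord m == n.+1 then 0 else (nat_of_ord m).+1.
Proof. exact: cyc_sigma. Qed.

Lemma lhs_bool d n (hn : (1 <= n)%N) (x y : Idx d n.+1) a b :
  [forall m, iset (icons a x) ord_max (icons b y ord_max) (cyc n.+2 (iota 1 n.+2) m)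
              == iset (icons b y) ord_max (icons a x ord_max) m]
  = [&& b == x ord0, a == x ord_max & Q x y].
Proof.
have -> : (b == x ord0) = (Some b == nx x 0) by rewrite nx0.
have -> : (a == x ord_max) = (Some a == nx x n) by rewrite nxmax.
have eS : forall u v : 'I_d, (u == v) = (Some u == Some v) by [].
under eq_forallb => m do rewrite eS -!nxE !nx_iset -!nxE !nx_icons cyc_sigma' /=.
rewrite /Q.
apply/forallP/and3P => [H|[h1 h2 /andP[h3 /forallP h4]]].
  split.
  - by move: (H ord0) => /=; ifs; move/eqP ->.
  - by move: (H ord_max) => /=; ifs; move/eqP ->.
  - apply/andP; split.
      by move: (H (inord n)); rewrite inordK //; ifs; move/eqP ->.
    apply/forallP => o; apply/implyP => ho.
    move: (H (inord o.+1)); rewrite inordK; last by have := ltn_ord o; lia.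
    by ifs; move/eqP ->.
move=> m; have hm := ltn_ord m; move: (nat_of_ord m) hm => k hk.
ifs.
- by [].
- by have -> : k = n by lia.
- have e : k = 0%N by lia.
  by rewrite e eq_sym.
have hk1 : (k.-1 < n)%N by lia.
have := h4 (Ordinal hk1); rewrite /= prednK; last lia.
by move/implyP; apply; lia.
Qed.

Lemma cyc_pi' n (m : 'I_(n.+1 + n.+1)) :
  nat_of_ord (cyc (n.+1 + n.+1) (rev (iota n.+1 n.+1)) m) =
  (fun p => if p == n then n.*2 else if (n < p)%N && (p <= n.*2)%N then p.-1 else p) (nat_of_ord m).
Proof. exact: cyc_pi. Qed.

Section RHS.
Variables (d n : nat) (hn : (1 <= n)%N) (x y : Idx d n.+1).
Let v : Idx d (n.+1 + n.+1) := [ffun m => icat x y (cyc (n.+1 + n.+1) (rev (iota n.+1 n.+1)) m)].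

Lemma rhs_a : @ileft d 1 n (@ileft d n.+1 n.+1 v) ord0 = x ord0.
Proof.
apply: Some_inj; rewrite -!nxE !nx_ileft /v (nx_comp _ (cyc_pi' (n:=n))) nx_icat /=.
by ifs.
Qed.

Lemma rhs_b : @ileft d 1 n (@iright d n.+1 n.+1 v) ord0 = x ord_max.
Proof.
apply: Some_inj; rewrite -!nxE !nx_ileft nx_iright /v (nx_comp _ (cyc_pi' (n:=n))) nx_icat /=.
by ifs; congr (nx _ _); lia.
Qed.

Lemma rhs_c : (@iright d 1 n (@ileft d n.+1 n.+1 v) == @iright d 1 n (@iright d n.+1 n.+1 v)) = Q x y.
Proof.
rewrite eq_nx.
under eq_forallb => o do rewrite !nx_iright nx_ileft /v !(nx_comp _ (cyc_pi' (n:=n))) !nx_icat.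
rewrite /Q.
apply/forallP/andP => [H|[h3 /forallP h4]].
  split.
    have hlt : (n.-1 < n)%N by lia.
    by move: (H (Ordinal hlt)) => /=; ifs; finimp.
  apply/forallP => o; apply/implyP => ho.
  by move: (H o); ifs; finimp.
move=> o; have ho := ltn_ord o; move: (nat_of_ord o) ho => k hk.
ifs.
- by move: h3; finimp.
- have hk1 : (k.+1 < n)%N by lia.
  by move: (h4 (Ordinal hk)) => /= /implyP /(_ hk1); finimp.
Qed.

End RHS.

Lemma collapse2 (C : nzRingType) d (c1 c2 : 'I_d) (q : bool) (G : 'I_d -> 'I_d -> C) :
  \sum_(a : 'I_d) \sum_(b : 'I_d) ([&& b == c1, a == c2 & q])%:R * G b a = q%:R * G c1 c2.
Proof.
transitivity (\sum_(a : 'I_d) (a == c2)%:R * (q%:R * G c1 a)); last by rewrite sum_delta.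
apply: eq_bigr => a _; rewrite (bigD1 c1) //= big1 ?addr0.
  by rewrite eqxx /=; case: (a == c2); case: q; rewrite /= ?mul1r ?mul0r.
by move=> b /negbTE ->; rewrite /= mul0r.
Qed.

Lemma sum_ffun_delta (C : nzRingType) N d (g : 'I_N -> 'I_d) (F : Idx d N -> C) :
  \sum_(v : Idx d N) [forall m, g m == v m]%:R * F v = F [ffun m => g m].
Proof.
rewrite -(sum_delta [ffun m => g m] F); apply: eq_bigr => v _.
have -> // : [forall m, g m == v m] = (v == [ffun m => g m]).
apply/forallP/eqP => [H|-> m]; last by rewrite ffunE.
by apply/ffunP => m; rewrite ffunE; apply/esym/eqP.
Qed.

Unset Implicit Arguments.

Theorem proposition6 (R : realType) (d n : nat) (A : 'M[R[i]]_d) :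
  (1 <= n)%N ->
  @ptr1 R[i] d n.+1
    (@mulop R[i] d n.+2
       (@ptrans R[i] d n.+2 ord_max (@permop R[i] d n.+2 (cyc n.+2 (iota 1 n.+2))))
       (@tens R[i] d 1 n.+1 (matop A) (@idop R[i] d n.+1)))
  = @tauinv R[i] d n.+1
      (@applyop R[i] d (n.+1 + n.+1)
         (@permop R[i] d (n.+1 + n.+1) (cyc (n.+1 + n.+1) (rev (iota n.+1 n.+1))))
         (@tau R[i] d n.+1 (@tens R[i] d 1 n (matop A) (@idop R[i] d n)))).
Proof.
move=> hn; apply: functional_extensionality => x; apply: functional_extensionality => y.
rewrite /ptr1 /tauinv /applyop.
under eq_bigr => a _ do rewrite /mulop sum_tens_id.
under eq_bigr => a _ do under eq_bigr => b _ do rewrite /ptrans /permop lhs_bool //.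
rewrite collapse2.
rewrite /permop sum_ffun_delta /tau /tens /matop /idop rhs_a // rhs_b // rhs_c //.
by rewrite mulrC.
Qed.
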